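(* Let $q$ be a prime power and let $n\ge 3$ be an odd integer. Then: (1) for each $d\in D_n$, there are exactly $\phi(d)/n$ SCRIM polynomials over $\mathbb{F}_{q^2}$ of degree $n$ and order $d$; (2) the number of SCRIM polynomials over $\mathbb{F}_{q^2}$ of degree $n$ is $\frac{1}{n}\sum_{d\in D_n}\phi(d)$.
   Context: $\phi$ is Euler's totient function. $D_n$ denotes the set of all positive divisors of $q^n+1$ that do not divide $q^k+1$ for any integer $0\le k<n$. For $f(x)\in\mathbb{F}_{q^2}[x]$ of degree $m$ with $f(0)\neq0$, the reciprocal is $f^*(x)=x^m f(0)^{-1}f(1/x)$, the conjugate of $g(x)=\sum g_ix^i$ is $\overline{g(x)}=\sum g_i^q x^i$, and the conjugate-reciprocal is $f^\dagger(x)=\overline{f^*(x)}$. A polynomial $f$ with $f(0)\ne 0$ is SCRIM if $f=f^\dagger$ and $f$ is irreducible and monic. The order of $f$ is the smallest positive integer $s$ such that $f(x)$ divides $x^s-1$. *)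

(* Defs.v *)
From HB Require Import structures.
From mathcomp Require Import all_boot all_order all_algebra all_field.
Set Implicit Arguments. Unset Strict Implicit. Unset Printing Implicit Defensive.
Import Order.TTheory GRing.Theory.
Local Open Scope ring_scope.

Definition prime_power (q : nat) : Prop :=
  exists p k : nat, [/\ prime p, (0 < k)%N & q = (p ^ k)%N].

Definition inD (q n d : nat) : bool :=
  (d %| q ^ n + 1)%N && [forall k : 'I_n, ~~ (d %| q ^ k + 1)%N].

Section Defs.
Variable F : fieldType.

(* reciprocal f^*(x) = x^m f(0)^{-1} f(1/x), m = deg f = size f - 1:
   its i-th coefficient is f(0)^{-1} f_{m-i} *)
Definition recip (f : {poly F}) : {poly F} :=
  (f`_0)^-1 *: \poly_(i < size f) f`_(size f - 1 - i).

Definition conjp (q : nat) (g : {poly F}) : {poly F} :=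
  map_poly (fun a => a ^+ q) g.

Definition conj_recip (q : nat) (f : {poly F}) : {poly F} := conjp q (recip f).

Definition SCRIM (q : nat) (f : {poly F}) : Prop :=
  [/\ f`_0 != 0, f = conj_recip q f, irreducible_poly f & f \is monic].

Definition poly_order (f : {poly F}) (s : nat) : Prop :=
  [/\ (0 < s)%N, f %| 'X^s - 1 &
      forall t : nat, (0 < t)%N -> (t < s)%N -> ~~ (f %| 'X^t - 1)].

Definition has_card (P : {poly F} -> Prop) (N : nat) : Prop :=
  exists s : seq {poly F}, [/\ uniq s, forall f, f \in s <-> P f & size s = N].
End Defs.

(* Main.v *)
Require Import Defs.
From HB Require Import structures.
From mathcomp Require Import all_boot all_order all_algebra all_field.
From mathcomp Require Import all_solvable.
From mathcomp Require Import zify.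
Import Order.TTheory GRing.Theory Num.Theory.
Local Open Scope ring_scope.

Module Helpers.
Set Implicit Arguments. Unset Strict Implicit. Unset Printing Implicit Defensive.

Section Frob.
Variables (R : comNzRingType) (e : nat) (he : [pchar R].-nat e).
Definition frobe (x : R) := (fun _ : [pchar R].-nat e => x ^+ e) he.
Lemma frobe_is_nmod : nmod_morphism frobe.
Proof.
split; rewrite /frobe; first by case/andP: he => he0 _; rewrite expr0n eqn0Ngt he0.
by move=> x y; rewrite exprDn_pchar.
Qed.
Lemma frobe_is_monoid : monoid_morphism frobe.
Proof. by split; rewrite /frobe ?expr1n // => x y; rewrite exprMn. Qed.
HB.instance Definition _ := GRing.isNmodMorphism.Build R R frobe frobe_is_nmod.
HB.instance Definition _ := GRing.isMonoidMorphism.Build R R frobe frobe_is_monoid.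
End Frob.

Lemma count_sum (T : Type) (a : pred T) (s : seq T) :
  count a s = (\sum_(x <- s) (a x : nat))%N.
Proof. by elim: s => [|x s IH]; rewrite ?big_nil ?big_cons //= IH. Qed.

Lemma sum_const_seq (T : Type) (s : seq T) (c : nat) :
  (\sum_(x <- s) c)%N = (size s * c)%N.
Proof. by elim: s => [|x s IH]; rewrite ?big_nil ?big_cons //= IH mulSn. Qed.

Lemma fiber_count (T U : eqType) (s : seq T) (g : T -> U) (c : nat) :
  uniq s -> (forall x, x \in s -> count (fun y => g y == g x) s = c) ->
  (c * size (undup (map g s)) = size s)%N.
Proof.
move=> us hc; set t := undup (map g s).
have -> : size s = (\sum_(x <- s) \sum_(u <- t) (g x == u : nat))%N.
  rewrite -sum1_size big_seq [RHS]big_seq; apply: eq_bigr => x xs.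
  rewrite -count_sum.
  have -> : count (fun u => g x == u) t = count_mem (g x) t.
    by apply: eq_count => u /=; rewrite eq_sym.
  by rewrite count_uniq_mem ?undup_uniq // mem_undup map_f.
rewrite exchange_big /=.
rewrite (eq_big_seq (fun _ => c)); first by rewrite sum_const_seq mulnC.
move=> u; rewrite mem_undup => /mapP [x xs ->]; rewrite -count_sum -(hc x xs).
by apply: eq_count => y.
Qed.


Section Main.
Variables (F : finFieldType) (K : closedFieldType) (io : {rmorphism F -> K}).
Variables (p k n : nat).
Hypotheses (pp : prime p) (k0 : (0 < k)%N) (hF : #|F| = ((p ^ k) ^ 2)%N)
  (hn3 : (3 <= n)%N) (hnodd : odd n).

Local Notation q := (p ^ k)%N.

Lemma charF : p \in [pchar F].
Proof. by apply: (card_finPcharP (n := (k * 2)%N)) => //; rewrite hF expnM. Qed.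
Lemma charK : p \in [pchar K].
Proof. exact: rmorph_pchar charF. Qed.

Lemma natP (R : nzRingType) (ch : p \in [pchar R]) a : [pchar R].-nat (q ^ a)%N.
Proof.
rewrite -expnM (eq_pnat _ (pcharf_eq ch)) pnatX pnatE //.
by rewrite [p \in _]inE eqxx.
Qed.

Local Notation fr a := (@frobe K _ (natP charK a)).
Local Notation frq := (@frobe F _ (natP charF 1)).

Lemma frE a x : fr a x = x ^+ (q ^ a)%N. Proof. by []. Qed.
Lemma frD a c x : fr (a + c) x = fr c (fr a x).
Proof. by rewrite !frE expnD exprM. Qed.
Lemma fr0 x : fr 0 x = x. Proof. by rewrite frE expn0 expr1. Qed.
Lemma fr_inj a : injective (fr a).
Proof. exact: fmorph_inj. Qed.
Lemma frV a x : fr a x^-1 = (fr a x)^-1.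
Proof. exact: fmorphV. Qed.
Lemma fr_eq0 a x : (fr a x == 0) = (x == 0).
Proof. by rewrite fmorph_eq0. Qed.

Lemma fr_iota a c : fr (2 * a) (io c) = io c.
Proof.
elim: a => [|a IH]; first by rewrite fr0.
rewrite mulnS addnC frD IH frE -rmorphXn -hF expf_card //.
Qed.

Lemma q_gt1 : (1 < q)%N.
Proof. by rewrite -(exp1n k) ltn_exp2r // prime_gt1. Qed.

Definition pre (y : K) : F := odflt 0 [pick b | io b == y].

Lemma pre_fixed y : fr 2 y = y -> io (pre y) = y.
Proof.
move=> hy; rewrite /pre; case: pickP => [b /eqP //|none]; suff: false by [].
have N1 : (1 < q ^ 2)%N by have := q_gt1; rewrite -mulnn; nia.
pose P : {poly K} := 'X^(q ^ 2) - 'X.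
have P0 : size P = (q ^ 2).+1.
  by rewrite size_polyDl ?size_polyXn // size_polyN size_polyX ltnS.
have := @max_poly_roots _ P (y :: map io (enum F)).
rewrite /= size_map -cardE hF P0 ltnn; apply.
- by rewrite -size_poly_eq0 P0.
- rewrite /root !hornerE -frE hy subrr eqxx /=.
  apply/allP => _ /mapP [b _ ->].
  by rewrite /root !hornerE -frE -[2%N]/(2 * 1)%N fr_iota subrr.
- rewrite map_inj_uniq ?enum_uniq ?andbT; last exact: fmorph_inj.
by apply/mapP => [[b _ yb]]; have := none b; rewrite -yb eqxx.
Qed.

Definition Gp e x : {poly K} := \prod_(0 <= j < e) ('X - (fr (2 * j) x)%:P).

Lemma Gp_monic e x : Gp e x \is monic.
Proof. exact: monic_prod_XsubC. Qed.
Lemma Gp_size e x : size (Gp e x) = e.+1.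
Proof. by rewrite size_prod_XsubC size_iota subn0. Qed.
Lemma root_Gp e x y : root (Gp e x) y = (y \in [seq fr (2 * j) x | j <- iota 0 e]).
Proof.
rewrite /Gp -(big_map (fun j => fr (2 * j) x) xpredT (fun a => ('X - a%:P))).
by rewrite root_prod_XsubC /index_iota subn0.
Qed.

Lemma frSE j x : fr (2 * j.+1) x = fr 2 (fr (2 * j) x).
Proof. by rewrite mulnS addnC frD. Qed.
Lemma frSE' j x : fr (2 * j.+1) x = fr (2 * j) (fr 2 x).
Proof. by rewrite mulnS frD. Qed.

Lemma Gp_shift e x : fr (2 * e) x = x -> Gp e (fr 2 x) = Gp e x.
Proof.
case: e => [|e] h; first by rewrite /Gp !big_geq.
rewrite /Gp big_nat_recr // big_nat_recl //=.
under eq_bigr do rewrite -frSE'.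
by rewrite -frSE' h fr0 mulrC.
Qed.

Lemma map_Gp e x : map_poly (fr 2) (Gp e x) = Gp e (fr 2 x).
Proof.
rewrite rmorph_prod; apply: eq_bigr => j _.
by rewrite /= map_polyXsubC /= -frSE frSE'.
Qed.

Lemma Gp_fixed e x : fr (2 * e) x = x -> map_poly (fr 2) (Gp e x) = Gp e x.
Proof. by move=> h; rewrite map_Gp Gp_shift. Qed.

Definition Phi e x : {poly F} := \poly_(i < e.+1) pre ((Gp e x)`_i).

Lemma Phi_map e x : fr (2 * e) x = x -> map_poly io (Phi e x) = Gp e x.
Proof.
move=> h; apply/polyP => i; rewrite coef_map coef_poly; case: ltnP => hi.
  by apply: pre_fixed; rewrite -coef_map Gp_fixed.
by rewrite raddf0 nth_default // Gp_size.
Qed.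

Lemma Phi_monic e x : fr (2 * e) x = x -> Phi e x \is monic.
Proof. by move=> h; rewrite -(map_monic io) Phi_map // Gp_monic. Qed.
Lemma Phi_size e x : fr (2 * e) x = x -> size (Phi e x) = e.+1.
Proof. by move=> h; rewrite -(size_map_poly io) Phi_map // Gp_size. Qed.

Lemma map_iota_fixed (h : {poly F}) :
  map_poly (fr 2) (map_poly io h) = map_poly io h.
Proof.
apply/polyP => i; rewrite !coef_map /=.
by rewrite -[2%N]/(2 * 1)%N fr_iota.
Qed.

Lemma root_iter (h : {poly F}) x j :
  root (map_poly io h) x -> root (map_poly io h) (fr (2 * j) x).
Proof.
move=> hx; elim: j => [|j IH]; first by rewrite fr0.
rewrite frSE /root -[X in X.[_]]map_iota_fixed horner_map.
by move: IH; rewrite /root => /eqP ->; rewrite rmorph0.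
Qed.

Lemma frI a b x : a = b -> fr a x = fr b x.
Proof. by move=> ->. Qed.

Lemma fr_period c x : fr c x = x -> forall a, fr a x = fr (a %% c) x.
Proof.
move=> h a.
have ht t : fr (t * c) x = x.
  elim: t => [|t IH]; first by rewrite mul0n fr0.
  by rewrite mulSn frD h IH.
by rewrite (frI x (divn_eq a c)) frD ht.
Qed.

Lemma fr_odd a u x : fr (2 * a) x = x -> fr (a * u.*2.+1) x = fr a x.
Proof.
move=> h; have E : (a * u.*2.+1 = u * (2 * a) + a)%N by rewrite -muln2; lia.
by rewrite (frI x E) (fr_period h) (frI x (modnMDl _ _ _)) -(fr_period h).
Qed.

Definition is_period e x :=
  [/\ (0 < e)%N, fr (2 * e) x = x & forall a, fr (2 * a) x = x -> (e %| a)%N].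

Lemma min_period x e0 : (0 < e0)%N -> fr (2 * e0) x = x ->
  exists e, is_period e x /\ (e <= e0)%N.
Proof.
move=> e00 h0.
have ex : exists e, (0 < e)%N && (fr (2 * e) x == x).
  by exists e0; rewrite e00 h0 eqxx.
case: (ex_minnP ex) => e /andP [e0' /eqP he] hmin.
exists e; split; last by apply: hmin; rewrite e00 h0 eqxx.
split => // a ha.
have : fr (2 * (a %% e)) x = x by rewrite (frI x (muln_modr _ _ _)) -(fr_period he).
case: (posnP (a %% e)) => [/eqP //|pos hm].
have := hmin _ (introT andP (conj pos (introT eqP hm))).
by rewrite leqNgt ltn_mod e0'.
Qed.

Lemma orbit_uniq e x : is_period e x -> uniq [seq fr (2 * j) x | j <- iota 0 e].
Proof.
case=> e0 he hd; rewrite map_inj_in_uniq ?iota_uniq //.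
move=> i j; rewrite !mem_iota !add0n.
wlog le : i j / (i <= j)%N.
  move=> W hi hj E; case: (leqP i j) => ij; first exact: W.
  by apply/esym/W => //; apply: ltnW.
move=> /andP [_ hi] /andP [_ hj] E.
have : fr (2 * (j - i)) x = x.
  apply: (@fr_inj (2 * i)); rewrite -frD E.
  by apply: frI; lia.
case: (posnP (j - i)) => [|pos]; first lia.
by move/hd/(dvdn_leq pos); lia.
Qed.

Lemma root_Gp_self e x : (0 < e)%N -> root (Gp e x) x.
Proof. by move=> e0; rewrite root_Gp; apply/mapP; exists 0%N; rewrite ?fr0 // mem_iota. Qed.

Lemma minpoly e x (h : {poly F}) : is_period e x -> root (map_poly io h) x ->
  Phi e x %| h.
Proof.
move=> per rx; case: (per) => e0 he _.
rewrite -(dvdp_map io) Phi_map //.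
rewrite /Gp -(big_map (fun j => fr (2 * j) x) xpredT (fun a => ('X - a%:P))).
apply: uniq_roots_dvdp; last by rewrite uniq_rootsE /index_iota subn0 orbit_uniq.
by apply/allP => _ /mapP [j _ ->]; apply: root_iter.
Qed.

Lemma Phi_irr e x : is_period e x -> irreducible_poly (Phi e x).
Proof.
move=> per; case: (per) => e0 he _.
split; first by rewrite Phi_size.
move=> g sg gd.
have g0 : g != 0.
  by apply: contraTneq gd => ->; rewrite dvd0p -size_poly_eq0 Phi_size.
have : size (map_poly io g) != 1%N by rewrite size_map_poly.
case/closed_rootP => y ry.
have : root (Gp e x) y.
  by rewrite -Phi_map //; apply: root_dvdp ry; rewrite dvdp_map.
rewrite root_Gp => /mapP [j]; rewrite mem_iota add0n => /andP [_ hj] yE.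
have rx : root (map_poly io g) x.
  have := root_iter (e - j) ry; rewrite yE -frD.
  by rewrite (frI x (_ : (2 * j + 2 * (e - j) = 2 * e)%N)) ?he //; lia.
by rewrite /eqp gd (minpoly per rx).
Qed.

Lemma q_gt0 : (0 < q)%N.
Proof. by rewrite expn_gt0 prime_gt0. Qed.

Lemma n_half : exists m, n = (2 * m + 1)%N.
Proof. by exists n./2; rewrite -[n in LHS]odd_double_half hnodd -muln2; lia. Qed.

Lemma conjp_coef (R : fieldType) (g : {poly R}) i : (conjp q g)`_i = g`_i ^+ q.
Proof. by rewrite /conjp coef_map_id0 // expr0n gtn_eqF // q_gt0. Qed.

Lemma conjpE (g : {poly F}) : conjp q g = map_poly frq g.
Proof. by []. Qed.

Lemma conjp_map (g : {poly F}) : map_poly io (conjp q g) = conjp q (map_poly io g).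
Proof. by apply/polyP => i; rewrite coef_map !conjp_coef coef_map; apply: rmorphXn. Qed.

Lemma recip_map (f : {poly F}) : map_poly io (recip f) = recip (map_poly io f).
Proof.
rewrite /recip map_polyZ size_map_poly coef_map fmorphV; congr (_ *: _).
apply/polyP => i; rewrite coef_map !coef_poly; case: ifP => hi.
  rewrite ifT //; apply: (leq_ltn_trans (leq_subr _ _)).
  by rewrite subn1 ltn_predL (leq_ltn_trans _ hi).
exact: raddf0.
Qed.

Lemma horner_recip (R : fieldType) (P : {poly R}) x : x != 0 ->
  (recip P).[x] = (P`_0)^-1 * (x ^+ (size P).-1 * P.[x^-1]).
Proof.
move=> x0; rewrite /recip hornerZ horner_poly horner_coef; congr (_ * _).
rewrite mulr_sumr (reindex_inj rev_ord_inj) /=; apply: eq_bigr => i _.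
have hi : (i < size P)%N := ltn_ord i.
rewrite (_ : (size P - 1 - (size P - i.+1) = i)%N); last first.
  by rewrite -subnDA add1n subnSK // subKn // ltnW.
rewrite mulrCA; congr (_ * _).
rewrite exprVn (_ : ((size P).-1 = (size P - i.+1) + i)%N); last lia.
by rewrite exprD mulfK // expf_neq0.
Qed.

Lemma horner_conjp (P : {poly K}) x : (conjp q P).[x ^+ q] = (P.[x]) ^+ q.
Proof. exact: horner_map (fr 1) P x. Qed.

Lemma fr1E x : fr 1 x = x ^+ q.
Proof. by rewrite frE expn1. Qed.

Lemma cr_monic_size (f : {poly F}) : f`_0 != 0 -> size f = n.+1 ->
  conj_recip q f \is monic /\ size (conj_recip q f) = n.+1.
Proof.
move=> f0 fs.
have Rs : size (\poly_(i < size f) f`_(size f - 1 - i)) = n.+1.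
  by rewrite fs size_poly_eq //= subn1 /= subnn.
have Rl : lead_coef (\poly_(i < size f) f`_(size f - 1 - i)) = f`_0.
  by rewrite lead_coefE Rs coef_poly fs ltnSn subn1 /= subnn.
have rm : recip f \is monic.
  by rewrite monicE /recip lead_coefZ Rl mulVf.
have rs : size (recip f) = n.+1.
  by rewrite /recip size_scale ?Rs // invr_eq0.
by rewrite /conj_recip conjpE map_monic size_map_poly.
Qed.

Lemma Phi_coef0 x : x != 0 -> fr (2 * n) x = x -> (Phi n x)`_0 != 0.
Proof.
move=> x0 hx; rewrite -(fmorph_eq0 io) -coef_map Phi_map // -horner_coef0.
rewrite -/(root _ 0) root_Gp; apply/mapP => [[j _]] /esym/eqP.
by rewrite fr_eq0 (negPf x0).
Qed.

Lemma scr_forward x : x != 0 -> fr n x = x^-1 -> is_period n x ->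
  Phi n x = conj_recip q (Phi n x).
Proof.
move=> x0 hn per; case: (per) => n0 h2n _.
have [m hm] := n_half.
have fm := Phi_monic h2n; have fs := Phi_size h2n.
have f0 := Phi_coef0 x0 h2n.
have [cm cs] := cr_monic_size f0 fs.
have dv : Phi n x %| conj_recip q (Phi n x).
  apply: (minpoly per).
  rewrite /conj_recip conjp_map recip_map Phi_map //.
  set y := fr (2 * n - 1) x.
  have y0 : y != 0 by rewrite fr_eq0.
  have yq : y ^+ q = x.
    by rewrite -fr1E -frD (frI x (_ : (2 * n - 1 + 1 = 2 * n)%N)) //; lia.
  rewrite /root -[X in _.[X]]yq horner_conjp horner_recip //.
  have : root (Gp n x) y^-1.
    rewrite /y -frV -hn -frD (frI x (_ : (n + (2 * n - 1) = 2 * (3 * m + 1))%N));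
      last lia.
    by rewrite -Phi_map //; apply: root_iter; rewrite Phi_map // root_Gp_self.
  by move/rootP => ->; rewrite !mulr0 expr0n gtn_eqF ?q_gt0.
apply/eqP; rewrite -eqp_monic //.
by rewrite -dvdp_size_eqp // fs cs.
Qed.

Lemma order_iff e x t : is_period e x -> (Phi e x %| 'X^t - 1) = (x ^+ t == 1).
Proof.
move=> per; case: (per) => e0 he _.
have mE : map_poly io ('X^t - 1) = 'X^t - 1.
  by rewrite rmorphB /= map_polyXn rmorph1.
apply/idP/eqP => [dv | xt].
  have : root (map_poly io ('X^t - 1)) x.
    by apply: root_dvdp (root_Gp_self x e0); rewrite -Phi_map // dvdp_map.
  by rewrite mE /root !hornerE subr_eq0 => /eqP.
by apply: minpoly per _; rewrite mE /root !hornerE xt subrr.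
Qed.

Lemma poly_order_prim e x d : is_period e x ->
  poly_order (Phi e x) d <-> d.-primitive_root x.
Proof.
move=> per; split.
  case=> d0 dv hmin; have xd : x ^+ d = 1 by apply/eqP; rewrite -(order_iff _ per).
  have [m pm md] := prim_order_exists d0 xd.
  have m0 := prim_order_gt0 pm.
  have : ~~ (m < d)%N.
    apply/negP => lt; have := hmin m m0 lt.
    by rewrite (order_iff _ per) prim_expr_order // eqxx.
  rewrite -leqNgt => dm; have := dvdn_leq d0 md => md'.
  by rewrite (_ : d = m) //; apply/eqP; rewrite eqn_leq dm md'.
move=> pd; split; first exact: prim_order_gt0 pd.
  by rewrite (order_iff _ per) prim_expr_order.
move=> t t0 td; rewrite (order_iff _ per) -(prim_order_dvd pd).
by apply/negP => /(dvdn_leq t0); rewrite leqNgt td.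
Qed.

Definition Pd d (f : {poly F}) := [/\ SCRIM q f, size f = n.+1 & poly_order f d].

Lemma inv_of (x y : K) : x != 0 -> y * x = 1 -> y = x^-1.
Proof. by move=> x0 h; rewrite -[y]mulr1 -(mulfV x0) mulrA h mul1r. Qed.

Lemma fwd d x : inD q n d -> d.-primitive_root x ->
  [/\ x != 0, fr n x = x^-1, is_period n x & Pd d (Phi n x)].
Proof.
move=> /andP [dm hk] pd.
have d0 := prim_order_gt0 pd.
have x0 : x != 0 by rewrite (prim_root_eq0 pd) gtn_eqF.
have hn : fr n x = x^-1.
  apply: inv_of x0 _; rewrite frE -exprSr -addn1.
  by apply/eqP; rewrite -(prim_order_dvd pd).
have h2n : fr (2 * n) x = x.
  by rewrite (frI x (_ : (2 * n = n + n)%N)) ?frD ?hn ?frV ?hn ?invrK //; lia.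
have per : is_period n x.
  have [e [[e0 he hde] le]] := min_period (ltnW (leq_trans (isT : (1 < 3)%N) hn3)) h2n.
  have en : (e %| n)%N := hde n h2n.
  case: (ltngtP e n) => [lt|gt|eq]; last by rewrite -eq; split.
    2: by move: le; rewrite leqNgt gt.
  exfalso; case/dvdnP: en => t ht.
  have tod : odd t by move: hnodd; rewrite ht oddM => /andP [].
  have := fr_odd (t./2) he; rewrite (frI x (_ : (e * (t./2).*2.+1 = n)%N)); last first.
    by rewrite ht [in RHS]mulnC; congr (e * _); rewrite -[in RHS](odd_double_half t) tod add1n.
  rewrite hn => hx.
  move/forallP: hk => /(_ (Ordinal lt)); rewrite (prim_order_dvd pd) /=.
  by rewrite exprD -frE -hx expr1 mulVf // eqxx.
split => //; split; last by apply/(poly_order_prim _ per).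
  split.
  - by apply: Phi_coef0.
  - exact: scr_forward.
  - exact: Phi_irr.
  - exact: Phi_monic.
exact: Phi_size.
Qed.

Lemma bwd f : SCRIM q f -> size f = n.+1 ->
  exists x, [/\ x != 0, fr n x = x^-1, is_period n x & f = Phi n x].
Proof.
case=> f0 fscr firr fmon fs.
have : size (map_poly io f) != 1%N by rewrite size_map_poly fs; apply/eqP; lia.
case/closed_rootP => x rx.
have x0 : x != 0.
  apply: contraNneq f0 => x0; move: rx; rewrite x0 /root horner_coef0 coef_map.
  by rewrite fmorph_eq0.
pose s := [seq fr (2 * j) x | j <- iota 0 n.+1].
have : ~~ uniq s.
  apply/negP => us; suff: false by [].
  have := @max_poly_roots _ (map_poly io f) s.
  rewrite size_map size_iota size_map_poly fs ltnn; apply => //.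
    by rewrite -size_poly_eq0 size_map_poly fs.
  by apply/allP => _ /mapP [j _ ->]; apply: root_iter.
have sE i : (i < n.+1)%N -> nth 0 s i = fr (2 * i) x.
  by move=> hi; rewrite (nth_map 0%N) ?size_iota // nth_iota.
case/(uniqPn 0) => i [j []]; rewrite size_map size_iota => ij js.
rewrite !sE //; last by apply: ltn_trans js.
move=> E.
have h1 : fr (2 * (j - i)) x = x.
  apply: (@fr_inj (2 * i)); rewrite -frD E.
  by apply: frI; lia.
have [e [per le]] : exists e, is_period e x /\ (e <= j - i)%N.
  by apply: min_period h1; lia.
case: (per) => e0 he _.
have dv : Phi e x %| f := minpoly per rx.
have eq1 : Phi e x %= f.
  by apply: firr.2 dv; rewrite (Phi_size he) eqSS -lt0n.
have fE : f = Phi e x by apply/eqP; rewrite eq_sym -eqp_monic // Phi_monic.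
have en : e = n by apply/eqP; rewrite -eqSS -fs fE Phi_size.
subst e.
exists x; split => //.
have h2n := he.
have r2 : root (map_poly io f) ((x^-1) ^+ q).
  rewrite {1}fscr /conj_recip conjp_map recip_map /root horner_conjp.
  by rewrite horner_recip ?invr_eq0 // invrK (rootP rx) !mulr0 expr0n gtn_eqF ?q_gt0.
move: r2; rewrite fE Phi_map // root_Gp => /mapP [j' _ E'].
have hJ : x^-1 = fr (2 * j' + (2 * n - 1)) x.
  rewrite frD -E' -fr1E -frD frV.
  by rewrite (frI x (_ : (1 + (2 * n - 1) = 2 * n)%N)) ?h2n //; lia.
set J := (2 * j' + (2 * n - 1))%N in hJ.
have Jodd : odd J.
  by rewrite /J (_ : (2 * j' + (2 * n - 1) = (2 * (j' + n - 1)).+1)%N) ?oddS ?oddM //; lia.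
clearbody J.
have h2J : fr (2 * J) x = x.
  by rewrite (frI x (_ : (2 * J = J + J)%N)) ?frD -?hJ ?frV -?hJ ?invrK //; lia.
have [_ _ hdv] := per; case/dvdnP: (hdv J h2J) => t ht.
have tod : odd t by move: Jodd; rewrite ht oddM => /andP [].
have := fr_odd (t./2) h2n.
rewrite (frI x (_ : (n * (t./2).*2.+1 = J)%N)); last first.
  by rewrite ht mulnC; congr (_ * n)%N; rewrite -[in RHS](odd_double_half t) tod add1n.
by move=> <-.
Qed.

Lemma Gp_orbit y j : fr (2 * n) y = y -> Gp n (fr (2 * j) y) = Gp n y.
Proof.
move=> hy; elim: j => [|j IH]; first by rewrite fr0.
rewrite frSE Gp_shift // -frD addnC frD hy //.
Qed.

Lemma coprime_q_d d : (d %| q ^ n + 1)%N -> coprime q d.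
Proof.
move=> dm; apply: (coprime_dvdr dm).
rewrite /coprime (_ : (q ^ n + 1 = q ^ n.-1 * q + 1)%N); last first.
  by rewrite -expnSr prednK // (ltn_trans _ hn3).
by rewrite gcdnMDl gcdn1.
Qed.

Lemma dK d : (d %| q ^ n + 1)%N -> d%:R != 0 :> K.
Proof.
move=> dm; apply/negP => /eqP h.
have pd : (p %| d)%N by rewrite (dvdn_pcharf charK) h.
have pq : (p %| q ^ n)%N.
  by rewrite -expnM dvdn_exp ?muln_gt0 ?k0 ?(ltn_trans _ hn3).
have := dvdn_trans pd dm; rewrite dvdn_addr // dvdn1 => /eqP p1.
by move: pp; rewrite p1.
Qed.

Lemma prim_exists d : (0 < d)%N -> d%:R != 0 :> K -> exists w : K, d.-primitive_root w.
Proof.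
move=> d0 dnz.
have [rs hrs] := closed_field_poly_normal ('X^d - 1 : {poly K}).
rewrite (monicP (monic_Xn_sub_1 _ d0)) scale1r in hrs.
have urs : uniq rs.
  by rewrite -separable_prod_XsubC -hrs separable_Xn_sub_1.
have : has d.-primitive_root rs.
  apply: has_prim_root => //.
    apply/allP => z zr; have : root ('X^d - 1) z by rewrite hrs root_prod_XsubC.
    by rewrite unity_rootE /root !hornerE subr_eq0.
  have := size_Xn_sub_1 K d0; rewrite hrs size_prod_XsubC => /eqP.
  by rewrite eqSS => /eqP ->.
by case/hasP => w _ pw; exists w.
Qed.

Lemma count_d d : inD q n d ->
  exists l : seq {poly F}, [/\ uniq l, forall f, f \in l <-> Pd d f &
    (n * size l)%N = totient d].
Proof.
move=> hd; have /andP [dm _] := hd.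
have d0 : (0 < d)%N by apply: dvdn_gt0 dm; rewrite addn1.
have [w pw] := prim_exists d0 (dK dm).
pose sd := [seq w ^+ i | i <- [seq i <- iota 0 d | coprime i d]].
have usd : uniq sd.
  rewrite map_inj_in_uniq ?filter_uniq ?iota_uniq // => i j.
  rewrite !mem_filter !mem_iota !add0n => /andP [_ /andP [_ hi]] /andP [_ /andP [_ hj]].
  by move/eqP; rewrite (eq_prim_root_expr pw) !modn_small // => /eqP.
have msd y : (y \in sd) = d.-primitive_root y.
  apply/idP/idP.
    case/mapP => i; rewrite mem_filter => /andP [ci _] ->.
    by rewrite prim_root_exp_coprime.
  move=> py; have [i yi] := prim_rootP pw (prim_expr_order py).
  apply/mapP; exists (i : nat) => //.
  rewrite mem_filter mem_iota leq0n add0n ltn_ord andbT /=.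
  by rewrite andbT -(prim_root_exp_coprime _ pw) -yi.
have ssd : size sd = totient d.
  rewrite size_map size_filter totient_count_coprime count_sum /index_iota subn0.
  by apply: eq_bigr => i _; rewrite coprime_sym.
exists (undup (map (Phi n) sd)); split.
- exact: undup_uniq.
- move=> f; rewrite mem_undup; split.
    case/mapP => y; rewrite msd => py ->.
    by have [] := fwd hd py.
  case=> scr fs po.
  have [x [x0 hx per fE]] := bwd scr fs.
  apply/mapP; exists x => //; rewrite msd.
  by apply/(poly_order_prim _ per); rewrite -fE.
rewrite -ssd; apply: fiber_count => // y; rewrite msd => py.
have [y0 hy pery _] := fwd hd py.
have [_ h2n _] := pery.
have pe : perm_eq [seq z <- sd | Phi n z == Phi n y] [seq fr (2 * j) y | j <- iota 0 n].
  apply: uniq_perm; rewrite ?filter_uniq ?orbit_uniq // => z.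
  rewrite mem_filter; apply/idP/idP.
    case/andP => /eqP E; rewrite msd => pz.
    have [_ _ perz _] := fwd hd pz; have [z0 h2z _] := perz.
    have : root (Gp n y) z by rewrite -(Phi_map h2n) -E (Phi_map h2z) root_Gp_self.
    by rewrite root_Gp.
  case/mapP => j _ ->.
  have pz : d.-primitive_root (fr (2 * j) y).
    by rewrite frE prim_root_exp_coprime // coprimeXl // coprime_q_d.
  rewrite msd pz andbT; apply/eqP.
  have [_ _ perz _] := fwd hd pz; have [_ h2z _] := perz.
  apply: (map_inj_poly (fmorph_inj io) (raddf0 io)).
  by rewrite (Phi_map h2z) (Phi_map h2n) Gp_orbit.
by rewrite -size_filter (perm_size pe) size_map size_iota.
Qed.

Lemma poly_order_uniq (f : {poly F}) a b : poly_order f a -> poly_order f b -> a = b.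
Proof.
move=> [a0 da ma] [b0 db mb].
case: (ltngtP a b) => [h|h|//].
  by have := mb a a0 h; rewrite da.
by have := ma b b0 h; rewrite db.
Qed.

Lemma order_of (f : {poly F}) : SCRIM q f -> size f = n.+1 ->
  exists d, inD q n d /\ poly_order f d.
Proof.
move=> scr fs; have [x [x0 hx per fE]] := bwd scr fs.
have [_ h2n hdv] := per.
have xm : x ^+ (q ^ n + 1) = 1 by rewrite exprD -frE hx expr1 mulVf.
have qn0 : (0 < q ^ n + 1)%N by rewrite addn1.
have [d pd dm] := prim_order_exists qn0 xm.
exists d; split; last by rewrite fE; apply/(poly_order_prim _ per).
rewrite /inD dm /=; apply/forallP => kk; apply/negP => dk.
have hk : fr kk x = x^-1.
  apply: inv_of x0 _; rewrite frE -exprSr -addn1.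
  by apply/eqP; rewrite -(prim_order_dvd pd).
have h2k : fr (2 * kk) x = x.
  by rewrite (frI x (_ : (2 * kk = kk + kk)%N)) ?frD ?hk ?frV ?hk ?invrK //; lia.
case: (posnP kk) => [k0'|kpos].
  move: hk; rewrite k0' fr0 => hxx.
  have : (x - 1) * (x + 1) == 0.
    by rewrite -subr_sqr expr2 {2}hxx mulfV // expr1n subrr.
  rewrite mulf_eq0 subr_eq0 addr_eq0 => hx1.
  have h2 : fr (2 * 1) x = x.
    by case/orP: hx1 => /eqP ->; [rewrite -(rmorph1 io) | rewrite -(rmorph1 io) -rmorphN];
      rewrite fr_iota.
  have := hdv _ h2; rewrite dvdn1 => /eqP n1.
  by move: hn3; rewrite n1.
have := dvdn_leq kpos (hdv _ h2k).
by rewrite leqNgt ltn_ord.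
Qed.

Lemma count_all (ds : seq nat) : uniq ds -> all (inD q n) ds ->
  exists l : seq {poly F}, [/\ uniq l,
    forall f, f \in l <-> (exists2 d, d \in ds & Pd d f) &
    (n * size l = \sum_(d <- ds) totient d)%N].
Proof.
elim: ds => [|d ds IH] /=.
  move=> _ _; exists [::]; split => //; first by move=> f; split => // [[]].
  by rewrite big_nil muln0.
case/andP => dn uds /andP [hd hds].
have [l1 [u1 m1 s1]] := count_d hd.
have [l2 [u2 m2 s2]] := IH uds hds.
exists (l1 ++ l2); split.
- rewrite cat_uniq u1 u2 andbT /=; apply/hasPn => f /m2 [d' d'ds P'].
  apply/negP => /m1 P.
  have [_ _ o1] := P; have [_ _ o2] := P'; have dd := poly_order_uniq o1 o2.
  by move: dn; rewrite dd d'ds.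
- move=> f; rewrite mem_cat; split.
    by case/orP => [/m1 P | /m2 [d' d'ds P']]; [exists d; rewrite ?inE ?eqxx |
      exists d'; rewrite // inE d'ds orbT].
  case=> d'; rewrite inE => /orP [/eqP -> P | d'ds P].
    by apply/orP; left; apply/m1.
  by apply/orP; right; apply/m2; exists d'.
by rewrite size_cat mulnDr s1 s2 big_cons.
Qed.

End Main.

End Helpers.
Import Helpers.

Theorem mainTheorem10 (F : finFieldType) (q n : nat)
  (hq : prime_power q) (hF : #|F| = (q ^ 2)%N)
  (hn3 : (3 <= n)%N) (hnodd : odd n) :
  (forall d : nat, inD q n d ->
     exists N : nat,
       has_card (fun f : {poly F} => [/\ SCRIM q f, size f = n.+1 & poly_order f d]) N
       /\ (N%:R : rat) = (totient d)%:R / n%:R)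
  /\
  (exists N : nat,
     has_card (fun f : {poly F} => SCRIM q f /\ size f = n.+1) N
     /\ (N%:R : rat) = n%:R^-1 * (\sum_(d <- divisors (q ^ n + 1) | inD q n d) totient d)%N%:R).
Proof.
case: hq => p [k [pp k0 qE]]; subst q.
have [K [io _]] := countable_algebraic_closure F.
have n0 : (n%:R : rat) != 0 by rewrite pnatr_eq0 -lt0n (ltn_trans _ hn3).
split.
  move=> d hd.
  have [l [ul ml sl]] := count_d io pp k0 hF hn3 hnodd hd.
  exists (size l); split; first by exists l; split.
  by rewrite -sl natrM mulrC mulKf.
have [l [ul ml sl]] := @count_all F K io p k n pp k0 hF hn3 hnodd
  [seq d <- divisors ((p ^ k) ^ n + 1) | inD (p ^ k) n d]
  (filter_uniq _ (divisors_uniq _)) (filter_all _ _).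
exists (size l); split.
  exists l; split => // f; rewrite ml; split.
    by case=> d _ [].
  case=> scr fs.
  have [d [hd po]] := order_of io pp k0 hF hn3 hnodd scr fs.
  exists d.
    rewrite mem_filter hd -dvdn_divisors ?addn1 //.
    by case/andP: hd => dm _; rewrite -addn1 dm.
  by rewrite /Pd; split.
by rewrite big_filter in sl; rewrite -sl natrM mulKf.
Qed.
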